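(* Let $k\ge 0$ be an integer and let $L_k$ be the $k\times(k+1)$ pencil with $\lambda$ in positions $(i,i)$ and $1$ in positions $(i,i+1)$, $i=1,\dots,k$, and zeros elsewhere. Then for each $j=0,1,\dots,k+1$ there exist vector polynomials $u_1(\lambda),\dots,u_{k+1}(\lambda)\in\mathbb{C}[\lambda]^k$ and $v_1(\lambda),\dots,v_{k+1}(\lambda)\in\mathbb{C}[\lambda]^{k+1}$, all of degree at most $1$, such that $$L_k=u_1(\lambda)v_1(\lambda)^T+\cdots+u_{k+1}(\lambda)v_{k+1}(\lambda)^T$$ and $\deg u_1=\cdots=\deg u_j=\deg v_{j+1}=\cdots=\deg v_{k+1}=0$.
   Context: The degree of a vector polynomial is the maximum degree of its entries (a zero vector is regarded as having degree $0$). *)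

(* Defs.v *)
From HB Require Import structures.
From mathcomp Require Import all_boot all_order all_algebra all_field.
Set Implicit Arguments. Unset Strict Implicit. Unset Printing Implicit Defensive.
Import Order.TTheory GRing.Theory Num.Theory.
Local Open Scope ring_scope.

(* Degree of a polynomial: (size p).-1, so the zero polynomial has degree 0. *)
Definition pdeg (R : nzRingType) (p : {poly R}) : nat := (size p).-1.

Definition vdeg (R : nzRingType) (n : nat) (u : 'cV[{poly R}]_n) : nat :=
  \max_(i < n) pdeg (u i ord0).

Definition Lpencil (R : nzRingType) (k : nat) : 'M[{poly R}]_(k, k.+1) :=
  \matrix_(i < k, j < k.+1)
    (if val j == val i then 'X else if val j == (val i).+1 then 1 else 0).

(* Main.v *)
Require Import Defs.
From HB Require Import structures.
From mathcomp Require Import all_boot all_order all_algebra all_field.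
From mathcomp Require Import zify.
Import Order.TTheory GRing.Theory Num.Theory.
Local Open Scope ring_scope.

Definition Lent (r c : nat) : {poly algC} :=
  if c == r then 'X else if c == r.+1 then 1 else 0.

Lemma size_Lent r c : (size (Lent r c) <= 2)%N.
Proof. rewrite /Lent; case: ifP => _; first by rewrite size_polyX.
case: ifP => _; by rewrite ?size_poly1 ?size_poly0. Qed.

Lemma vdeg_le (n m : nat) (u : 'cV[{poly algC}]_n) :
  (forall i, (size (u i ord0) <= m.+1)%N) -> (vdeg u <= m)%N.
Proof.
move=> H; rewrite /vdeg; apply/bigmax_leqP => i _; rewrite /pdeg.
by have := H i; case: (size _).
Qed.

Lemma size01 (b : bool) : (size ((if b then 1%R else 0%R) : {poly algC}) <= 1)%N.
Proof. by case: b; rewrite ?size_poly1 ?size_poly0. Qed.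

Theorem lemma3p7 (k j : nat) (hj : (j <= k.+1)%N) :
  exists (u : 'I_k.+1 -> 'cV[{poly algC}]_k)
         (v : 'I_k.+1 -> 'cV[{poly algC}]_k.+1),
    Lpencil algC k = \sum_(i < k.+1) (u i *m (v i)^T) /\
    (forall i : 'I_k.+1, (vdeg (u i) <= 1)%N /\ (vdeg (v i) <= 1)%N) /\
    (forall i : 'I_k.+1, (val i < j)%N -> vdeg (u i) = 0%N) /\
    (forall i : 'I_k.+1, (j <= val i)%N -> vdeg (v i) = 0%N).
Proof.
exists (fun i : 'I_k.+1 => \col_(r < k) (if (i < j)%N then (if val r == val i then 1 else 0)
                 else if (j <= r)%N then Lent r i else 0)).
exists (fun i : 'I_k.+1 => \col_(c < k.+1) (if (i < j)%N then Lent i c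
                 else if val c == val i then 1 else 0)).
split; last split; last split.
- apply/matrixP => r c; rewrite summxE !mxE.
  under eq_bigr => i _ do rewrite !mxE big_ord1 !mxE.
  have -> : (if val c == val r then 'X else if val c == (val r).+1 then 1 else 0)
            = Lent r c by [].
  case: (ltnP r j) => hr.
  + rewrite (bigD1 (widen_ord (leqnSn k) r)) //= hr eqxx mul1r big1 ?addr0 //.
    move=> i /eqP hi; case: ifP => hij.
      rewrite ifN ?mul0r //; apply/negP => /eqP e; apply: hi; apply: val_inj => /=.
      by rewrite e.
    by rewrite mul0r.
  + rewrite (bigD1 c) //= big1 ?addr0.
      case: ltnP => hc; last by rewrite eqxx mulr1.
      rewrite ifN ?mul0r; last by apply/negP => /eqP e; move: hc hr; rewrite e; lia.
      rewrite /Lent !ifN //; apply/negP => /eqP e; move: hc hr; rewrite e; lia.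
    move=> i hi; case: ltnP => hij.
      by rewrite ifN ?mul0r //; apply/negP => /eqP e; move: hij hr; rewrite e; lia.
    rewrite ifN ?mulr0 //; apply/negP => /eqP e; move/eqP: hi; apply; exact: val_inj.
- move=> i; split; apply: vdeg_le => r; rewrite mxE;
  repeat case: ifP => _; rewrite ?size_Lent ?size_poly0 ?size_poly1 //.
- move=> i hi; apply/eqP; rewrite -leqn0; apply: vdeg_le => r; rewrite mxE hi.
  exact: size01.
- move=> i hi; apply/eqP; rewrite -leqn0; apply: vdeg_le => r; rewrite mxE ltnNge hi /=.
  exact: size01.
Qed.
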